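(* Consider the SBBS with $d=2$ balls, error probability $\varepsilon\in(0,1)$ and capacity $c\ge2$, with gap process $(W_t)_{t\ge0}$ on $\mathbb Z_{\ge0}$. Let $\tau=\inf\{t\ge1:W_t=0\}$. Then for every $w\in\mathbb Z_{\ge0}$, $P(\tau<\infty\mid W_0=w)=1$ and $\mathbb E[\tau\mid W_0=w]=\infty$.
   Context: Stochastic box-ball system (SBBS). Fix an error probability $\varepsilon\in[0,1]$ and a capacity $c\in\{1,2,\dots\}\cup\{\infty\}$. A configuration is $\zeta\in\{0,1\}^{\mathbb N}$, $\mathbb N=\{1,2,\dots\}$, with finitely many $1$'s (balls). Given $\zeta$, the stochastic carrier process $\Gamma$ is defined by $\Gamma(0)=0$ and recursively (with fresh independent randomness at each $k$): $\Gamma(k)=\Gamma(k-1)+1$ with probability $1-\varepsilon$ (and $\Gamma(k)=\Gamma(k-1)$ otherwise) if $\zeta(k)=1$ and $\Gamma(k-1)<c$; $\Gamma(k)=\Gamma(k-1)-1$ if $\zeta(k)=0$ and $\Gamma(k-1)\ge1$; $\Gamma(k)=\Gamma(k-1)$ otherwise. The new configuration is $\zeta'(k)=\mathbf 1(\Gamma(k)-\Gamma(k-1)=-1)+\mathbf 1(\Gamma(k)=\Gamma(k-1),\ \zeta(k)=1)$. Iterating independently gives the SBBS trajectory $(\zeta_t)_{t\in\mathbb Z_{\ge0}}$. With $d=2$ balls at positions $\zeta^{(1)}_t<\zeta^{(2)}_t$, the gap process is $W_t=\zeta^{(2)}_t-\zeta^{(1)}_t-1$, a Markov chain on $\mathbb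 Z_{\ge0}$. *)

(* Defs.v *)
From HB Require Import structures.
From mathcomp Require Import all_boot all_order all_algebra.
From mathcomp Require Import all_classical all_reals topology normedtype sequences.
Set Implicit Arguments. Unset Strict Implicit. Unset Printing Implicit Defensive.
Import Order.TTheory GRing.Theory Num.Theory.
Local Open Scope ring_scope.

(* Capacity c in {1,2,...} U {oo}: [Some c] is a finite capacity c,
   [None] is infinite capacity. *)
Definition capacity := option nat.
Definition below_cap (cap : capacity) (g : nat) : bool :=
  if cap is Some c then (g < c)%N else true.
Definition cap_ge2 (cap : capacity) : Prop :=
  if cap is Some c then (2 <= c)%N else True.

(* A configuration zeta in {0,1}^N with finitely many balls is represented by
   the (sorted) list s of positions k >= 1 with zeta(k) = 1. *)
Definition config := seq nat.
Definition zeta (s : config) (k : nat) : bool := k \in s.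

(* Carrier process Gamma(k), driven by coin values u k
   (u k = true  <-> the "increase" event of probability 1 - eps at site k). *)
Fixpoint carrier (cap : capacity) (s : config) (u : nat -> bool) (k : nat)
  : nat :=
  match k with
  | 0 => 0
  | k'.+1 =>
      let g := carrier cap s u k' in
      if zeta s k then (if below_cap cap g && u k then g.+1 else g)
      else g.-1
  end.

Definition new_zeta (cap : capacity) (s : config) (u : nat -> bool) (k : nat)
  : bool :=
  let g0 := carrier cap s u k.-1 in
  let g1 := carrier cap s u k in
  (0 < k)%N && ((g1.+1 == g0) || ((g1 == g0) && zeta s k)).

Definition maxpos (s : config) : nat := foldr maxn 0%N s.

(* coins at sites 1..L, given as a boolean list bs (site k uses nth bs (k-1));
   coins at sites > maxpos s are never consulted by the carrier. *)
Definition coins (bs : seq bool) (k : nat) : bool := nth false bs k.-1.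

(* New configuration; all balls lie in [1, maxpos s + size s] since the
   carrier holds at most size s balls after the last ball. *)
Definition sbbs_step (cap : capacity) (s : config) (bs : seq bool) : config :=
  [seq k <- iota 1 (maxpos s + size s) | new_zeta cap s (coins bs) k].

Fixpoint all_bseq (n : nat) : seq (seq bool) :=
  if n is n'.+1 then [seq b :: t | b <- [:: true; false], t <- all_bseq n']
  else [:: [::]].

Definition coin_weight {R : realType} (eps : R) (bs : seq bool) : R :=
  \prod_(b <- bs) (if b then 1 - eps else eps).

(* law of one SBBS step from s: finitely supported weighted list *)
Definition step_dist {R : realType} (eps : R) (cap : capacity) (s : config)
  : seq (R * config) :=
  [seq (coin_weight eps bs, sbbs_step cap s bs) | bs <- all_bseq (maxpos s)].

Fixpoint traj_dist {R : realType} (eps : R) (cap : capacity) (n : nat)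
  (s : config) : seq (R * seq config) :=
  if n is n'.+1 then
    flatten [seq [seq (x.1 * p.1, s :: p.2) | p <- traj_dist eps cap n' x.2]
            | x <- step_dist eps cap s]
  else [:: (1, [:: s])].

Definition gap (s : config) : nat := (nth 0 s 1 - nth 0 s 0).-1.

Definition gap_at (tr : seq config) (t : nat) : nat := gap (nth [::] tr t).

(* tau = inf {t >= 1 : W_t = 0};  on a trajectory of length n:
   [tau_le n tr] <-> tau <= n,   [tau_min n tr] = min(tau, n). *)
Definition tau_le (n : nat) (tr : seq config) : bool :=
  has (fun t => gap_at tr t == 0%N) (iota 1 n).
Definition tau_min (n : nat) (tr : seq config) : nat :=
  minn (find (fun t => gap_at tr t == 0%N) (iota 1 n)).+1 n.

Definition prob_tau_le {R : realType} (eps : R) (cap : capacity) (s : config)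
  (n : nat) : R :=
  \sum_(p <- traj_dist eps cap n s) p.1 * (tau_le n p.2)%:R.
Definition exp_tau_min {R : realType} (eps : R) (cap : capacity) (s : config)
  (n : nat) : R :=
  \sum_(p <- traj_dist eps cap n s) p.1 * (tau_min n p.2)%:R.

Definition init2 (a w : nat) : config := [:: a; (a + w).+1].

(* Main.v *)
Require Import Defs.
From HB Require Import structures.
From mathcomp Require Import all_boot all_order all_algebra.
From mathcomp Require Import all_classical all_reals topology normedtype sequences.
From mathcomp Require Import zify ring lra.
Import Order.TTheory GRing.Theory Num.Theory numFieldNormedType.Exports.
Set Implicit Arguments. Unset Strict Implicit. Unset Printing Implicit Defensive.

Lemma zeta2 a q k : zeta [:: a; q] k = (k == a) || (k == q).
Proof. by rewrite /zeta !inE. Qed.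

Lemma below_cap_le1 cap g : cap_ge2 cap -> (g <= 1)%N -> below_cap cap g.
Proof. by case: cap => [c|] //= h1 h2; lia. Qed.

Lemma carrier2 cap a w u : cap_ge2 cap -> (0 < a)%N -> forall k,
  carrier cap (init2 a w) u k =
  if (k < (a+w).+1)%N then nat_of_bool (u a && (k == a))
  else ((u a && (w == 0%N)) + u (a+w).+1 - (k - (a+w).+1))%N.
Proof.
move=> hc ha; elim=> [|k IH] /=.
  by case: (u a) => /=; lia.
rewrite IH /init2 zeta2.
have [ek|nk] := eqVneq k.+1 a.
  rewrite -ek /=.
  have hk : (k < (k.+1+w).+1)%N by lia.
  have hk' : (k.+1 < (k.+1+w).+1)%N by lia.
  rewrite hk hk' (_ : (k == k.+1) = false); last by lia.
  rewrite andbF below_cap_le1 //=.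
  by case: (u k.+1).
have [eq|nq] := eqVneq k.+1 (a+w).+1.
  rewrite -eq /= ltnSn ltnn subnn subn0.
  rewrite below_cap_le1 //; last by case: (u a); case: (k == a).
  have -> : (k == a) = (w == 0%N) by apply/eqP/eqP; lia.
  by case: (u a); case: (u k.+1); case: (w == 0%N).
rewrite /=.
case: (ltnP k (a+w).+1) => h1; case: (ltnP k.+1 (a+w).+1) => h2;
  case: (u a) => /=; case: (u (a+w).+1) => /=; lia.
Qed.

Definition next2 a w (b1 b2 : bool) : config :=
  if w == 0%N then
    (if b1 then (if b2 then init2 a.+2 0 else init2 a.+1 0)
     else (if b2 then init2 a 1 else init2 a 0))
  else (if b1 then (if b2 then init2 a.+1 w else init2 a.+1 w.-1)
     else (if b2 then init2 a w.+1 else init2 a w)).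

Lemma maxpos2 a w : maxpos (init2 a w) = (a + w).+1.
Proof. rewrite /maxpos /init2 /=; lia. Qed.

Lemma step2 cap a w bs : cap_ge2 cap -> (0 < a)%N ->
  sbbs_step cap (init2 a w) bs =
  next2 a w (coins bs a) (coins bs (a+w).+1).
Proof.
move=> hc ha.
apply: (@irr_sorted_eq _ ltn ltn_trans ltnn).
- exact: (sorted_filter ltn_trans _ (iota_ltn_sorted 1 _)).
- rewrite /next2; case: (w == 0%N); case: (coins bs a); case: (coins bs _);
   rewrite /init2 /= andbT; lia.
move=> k; rewrite mem_filter mem_iota maxpos2 /new_zeta !carrier2 //.
rewrite /init2 zeta2.
case: k => [|j] /=; first by rewrite /next2; case: (w == 0%N); case: (coins bs a); case: (coins bs _); rewrite /init2 !inE; apply/idP/idP; lia.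
rewrite /next2; case: w => [|w] /=; case: (coins bs a); case: (coins bs _);
  rewrite /init2 !inE /=;
  case: (ltnP j _) => h1; case: (ltnP j.+1 _) => h2; apply/idP/idP; lia.
Qed.

Local Open Scope ring_scope.

Section Weights.
Variables (R : realType) (eps : R).

Definition wt (b : bool) : R := if b then 1 - eps else eps.

Lemma sum_bseqS m (F : seq bool -> R) :
  \sum_(bs <- all_bseq m.+1) F bs =
  \sum_(t <- all_bseq m) F (true :: t) + \sum_(t <- all_bseq m) F (false :: t).
Proof.
by rewrite /= !big_cat !big_map big_nil /= addr0.
Qed.

Lemma cwS b t : coin_weight eps (b :: t) = wt b * coin_weight eps t.
Proof. by rewrite /coin_weight big_cons. Qed.

Lemma mass_bseq m : \sum_(bs <- all_bseq m) coin_weight eps bs = 1.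
Proof.
elim: m => [|m IH]; first by rewrite /= big_cons big_nil /coin_weight big_nil addr0.
rewrite sum_bseqS.
under eq_bigr do rewrite cwS.
under [X in _ + X]eq_bigr do rewrite cwS.
rewrite -!mulr_sumr IH /wt; ring.
Qed.

Lemma single_bseq m k (g : bool -> R) : (k < m)%N ->
  \sum_(bs <- all_bseq m) coin_weight eps bs * g (nth false bs k) =
  wt true * g true + wt false * g false.
Proof.
elim: m k => [|m IH] k hk //.
rewrite sum_bseqS.
under eq_bigr do rewrite cwS -mulrA.
under [X in _ + X]eq_bigr do rewrite cwS -mulrA.
rewrite -!mulr_sumr.
case: k hk => [|k] hk /=.
  by rewrite -!mulr_suml !mass_bseq !mul1r.
rewrite !IH //.
rewrite /wt; ring.
Qed.

Lemma double_bseq m i j (g : bool -> bool -> R) : (i < j)%N -> (j < m)%N ->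
  \sum_(bs <- all_bseq m) coin_weight eps bs * g (nth false bs i) (nth false bs j) =
  \sum_(b1 <- [:: true; false]) \sum_(b2 <- [:: true; false])
     wt b1 * wt b2 * g b1 b2.
Proof.
elim: m i j => [|m IH] i j hij hj //.
rewrite sum_bseqS.
under eq_bigr do rewrite cwS -mulrA.
under [X in _ + X]eq_bigr do rewrite cwS -mulrA.
rewrite -!mulr_sumr.
case: i hij => [|i] hij /=.
  case: j hij hj => [|j] // _ hj /=.
  rewrite !single_bseq //.
  by rewrite !big_cons !big_nil /=; ring.
case: j hij hj => [|j] // hij hj /=.
rewrite !IH //.
rewrite /wt.
rewrite !big_cons !big_nil /=; ring.
Qed.

End Weights.

Section Kernel.
Variables (R : realType) (eps : R) (cap : capacity).

Definition rr : R := eps * (1 - eps).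

Definition Kop (f : nat -> R) (w : nat) : R :=
  if w == 0%N then (1 - rr) * f 0%N + rr * f 1%N
  else rr * f w.+1 + rr * f w.-1 + (1 - rr *+ 2) * f w.

Lemma step_sum a w (F : config -> R) (f : nat -> R) :
  cap_ge2 cap -> (0 < a)%N ->
  (forall a' w', (0 < a')%N -> F (init2 a' w') = f w') ->
  \sum_(x <- step_dist eps cap (init2 a w)) x.1 * F x.2 = Kop f w.
Proof.
move=> hc ha hF.
rewrite /step_dist big_map maxpos2 /=.
under eq_bigr do rewrite step2 // /coins /=.
rewrite (@double_bseq R eps (a+w).+1 a.-1 (a+w) (fun b1 b2 => F (next2 a w b1 b2))); try lia.
rewrite !big_cons !big_nil /= /next2 /Kop /rr /wt.
case: w => [|w] /=; rewrite !hF //; ring.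
Qed.

End Kernel.

Lemma iota2 n : iota 2 n = map succn (iota 1 n).
Proof. by rewrite -(iotaDl 1 1) . Qed.

Lemma tau_leS n s tr :
  tau_le n.+1 (s :: tr) = (gap (nth [::] tr 0) == 0%N) || tau_le n tr.
Proof. by rewrite /tau_le /= iota2 has_map. Qed.

Lemma tau_minS n s tr :
  tau_min n.+1 (s :: tr) = (1 + (gap (nth [::] tr 0) != 0%N) * tau_min n tr)%N.
Proof.
rewrite /tau_min /= iota2 find_map /gap_at /=.
case: (gap (nth [::] tr 0) == 0%N) => /=; first by rewrite minnE; lia.
by rewrite minnSS mul1n add1n.
Qed.

Lemma gap_init2 a w : gap (init2 a w) = w.
Proof. rewrite /gap /init2 /=; lia. Qed.

Section Traj.
Variables (R : realType) (eps : R) (cap : capacity).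

Lemma traj_sum n s (G : seq config -> R) :
  \sum_(p <- traj_dist eps cap n.+1 s) p.1 * G p.2 =
  \sum_(x <- step_dist eps cap s)
     x.1 * \sum_(p <- traj_dist eps cap n x.2) p.1 * G (s :: p.2).
Proof.
rewrite /= big_flatten big_map; apply: eq_bigr => x _.
by rewrite big_map mulr_sumr; apply: eq_bigr => p _ /=; rewrite mulrA.
Qed.

Lemma traj_head n s p : p \in traj_dist eps cap n s -> nth [::] p.2 0 = s.
Proof.
case: n => [|n] /=; first by rewrite inE => /eqP ->.
case/flattenP => l /mapP [x _ ->] /mapP [q _ ->] //.
Qed.

Lemma mass_step s : \sum_(x <- step_dist eps cap s) x.1 = 1.
Proof. by rewrite /step_dist big_map mass_bseq. Qed.

Lemma mass_traj n s : \sum_(p <- traj_dist eps cap n s) p.1 = 1.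
Proof.
elim: n s => [|n IH] s; first by rewrite /= big_cons big_nil addr0.
transitivity (\sum_(p <- traj_dist eps cap n.+1 s) p.1 * (fun _ => 1) p.2).
  by apply: eq_bigr => p _; rewrite mulr1.
rewrite (traj_sum n s (fun _ => 1)) -[RHS](mass_step s); apply: eq_bigr => x _.
rewrite (eq_bigr (fun p => p.1)) ?IH ?mulr1 // => p _.
by rewrite mulr1.
Qed.

Definition Surv n s := \sum_(p <- traj_dist eps cap n s) p.1 * (~~ tau_le n p.2)%:R.
Definition Expt n s := \sum_(p <- traj_dist eps cap n s) p.1 * (tau_min n p.2)%:R.

Lemma Surv0 s : Surv 0 s = 1.
Proof. by rewrite /Surv /= big_cons big_nil /tau_le /= mulr1 addr0. Qed.

Lemma Expt0 s : Expt 0 s = 0.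
Proof. by rewrite /Expt /= big_cons big_nil /tau_min minn0 mulr0 addr0. Qed.

Lemma SurvS n s : Surv n.+1 s =
  \sum_(x <- step_dist eps cap s) x.1 * ((gap x.2 != 0%N)%:R * Surv n x.2).
Proof.
rewrite /Surv (traj_sum n s (fun tr => (~~ tau_le n.+1 tr)%:R)); apply: eq_bigr => x _; congr (_ * _).
rewrite mulr_sumr big_seq_cond [RHS]big_seq_cond; apply: eq_bigr => p /andP [hp _].
rewrite tau_leS (traj_head hp) negb_or; case: (gap x.2 == 0%N); case: (tau_le n p.2) => /=; ring.
Qed.

Lemma ExptS n s : Expt n.+1 s =
  1 + \sum_(x <- step_dist eps cap s) x.1 * ((gap x.2 != 0%N)%:R * Expt n x.2).
Proof.
rewrite /Expt (traj_sum n s (fun tr => (tau_min n.+1 tr)%:R)) -[X in _ = X + _](mass_step s) -big_split /=; apply: eq_bigr => x _.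
transitivity (x.1 * (1 + ((gap x.2 != 0%N)%:R * \sum_(p <- traj_dist eps cap n x.2) p.1 * (tau_min n p.2)%:R))); last by ring.
congr (_ * _).
rewrite mulr_sumr -[X in _ = X + _](mass_traj n x.2) -big_split /=.
rewrite big_seq_cond [RHS]big_seq_cond; apply: eq_bigr => p /andP [hp _].
rewrite tau_minS (traj_head hp) natrD natrM; ring.
Qed.

Lemma prob_Surv n s : prob_tau_le eps cap s n = 1 - Surv n s.
Proof.
rewrite /prob_tau_le /Surv -[X in _ = X - _](mass_traj n s) -sumrB; apply: eq_bigr => p _.
by case: (tau_le n p.2); rewrite /= ?mulr1 ?mulr0 ?subr0 ?subrr.
Qed.

End Traj.

Section Gap.
Variables (R : realType) (eps : R).

Definition Hf (f : nat -> R) (v : nat) : R := (v != 0%N)%:R * f v.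

Fixpoint gs (n : nat) : nat -> R :=
  if n is n'.+1 then Kop eps (Hf (gs n')) else fun _ => 1.
Fixpoint es (n : nat) : nat -> R :=
  if n is n'.+1 then fun w => 1 + Kop eps (Hf (es n')) w else fun _ => 0.

Lemma Surv_gs cap n a w : cap_ge2 cap -> (0 < a)%N ->
  Surv eps cap n (init2 a w) = gs n w.
Proof.
move=> hc; elim: n a w => [|n IH] a w ha; first by rewrite Surv0.
rewrite SurvS /=.
apply: (@step_sum R eps cap a w (fun c => (gap c != 0%N)%:R * Surv eps cap n c)) => //.
by move=> a' w' ha'; rewrite gap_init2 IH.
Qed.

Lemma Expt_es cap n a w : cap_ge2 cap -> (0 < a)%N ->
  Expt eps cap n (init2 a w) = es n w.
Proof.
move=> hc; elim: n a w => [|n IH] a w ha; first by rewrite Expt0.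
rewrite ExptS /=; congr (_ + _).
apply: (@step_sum R eps cap a w (fun c => (gap c != 0%N)%:R * Expt eps cap n c)) => //.
by move=> a' w' ha'; rewrite gap_init2 IH.
Qed.

Lemma Kop_sum n (F : nat -> nat -> R) w :
  Kop eps (fun v => \sum_(k < n) F k v) w = \sum_(k < n) Kop eps (F k) w.
Proof.
rewrite /Kop; case: (w == 0%N).
  by rewrite !mulr_sumr -big_split.
by rewrite !mulr_sumr -!big_split.
Qed.

Lemma es_sum n w : es n w = \sum_(k < n) gs k w.
Proof.
elim: n w => [|n IH] w; first by rewrite big_ord0.
rewrite big_ord_recl /=; congr (_ + _).
transitivity (\sum_(k < n) Kop eps (Hf (gs k)) w); last by apply: eq_bigr => k _.
rewrite -(@Kop_sum n (fun k => Hf (gs k))).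
congr (Kop _ _ _); apply: funext => v; by rewrite /Hf IH mulr_sumr.
Qed.

End Gap.

Local Open Scope classical_set_scope.
Local Open Scope ring_scope.

Section Ana.
Variables (R : realType) (eps : R).
Hypothesis he : 0 < eps < 1.

Lemma rr_gt0 : 0 < rr eps.
Proof. case/andP: he => h1 h2; rewrite /rr; apply: mulr_gt0 => //; lra. Qed.

Lemma rr_le : rr eps <= 4^-1.
Proof.
rewrite /rr.
have : 0 <= (eps - 2^-1) ^+ 2 by apply: sqr_ge0.
rewrite expr2; nra.
Qed.

Lemma Kop_mono f h w : (forall v, f v <= h v) -> Kop eps f w <= Kop eps h w.
Proof.
move=> fh; have r0 := rr_gt0; have r1 := rr_le.
rewrite /Kop; case: ifP => _.
  by apply: lerD; apply: ler_wpM2l => //; lra.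
apply: lerD; first (apply: lerD; apply: ler_wpM2l => //; lra).
by apply: ler_wpM2l => //; rewrite mulr2n; lra.
Qed.

Lemma Kop_cst c w : Kop eps (fun _ => c) w = c.
Proof. by rewrite /Kop mulr2n; case: ifP => _; ring. Qed.

Lemma Hf_bnd (f : nat -> R) v : 0 <= f v <= 1 -> 0 <= Hf f v <= 1.
Proof. by rewrite /Hf; case: (v != 0%N); rewrite /= ?mul1r ?mul0r ?lexx ?ler01. Qed.

Lemma gs_bnd n w : 0 <= gs eps n w <= 1.
Proof.
elim: n w => [|n IH] w /=; first by rewrite ler01 lexx.
apply/andP; split.
  by rewrite -{1}(Kop_cst 0 w); apply: Kop_mono => v; case/andP: (Hf_bnd (IH v)).
by rewrite -[leRHS](Kop_cst 1 w); apply: Kop_mono => v; case/andP: (Hf_bnd (IH v)).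
Qed.

Lemma gs_decr n w : gs eps n.+1 w <= gs eps n w.
Proof.
elim: n w => [|n IH] w; first by case/andP: (gs_bnd 1 w).
rewrite [leLHS]/= [leRHS]/=; apply: Kop_mono => v.
by rewrite /Hf; case: (v != 0%N); rewrite /= ?mul1r ?mul0r ?IH.
Qed.

Lemma gs_cvgn w : cvgn (fun n => gs eps n w).
Proof.
apply: nonincreasing_is_cvgn.
  by apply/nonincreasing_seqP => n; exact: gs_decr.
by exists 0 => _ [n _ <-]; case/andP: (gs_bnd n w).
Qed.

Definition Lg w := limn (fun n => gs eps n w).

Lemma Kop_cvg (f : nat -> nat -> R) (l : nat -> R) w :
  (forall v, (fun n => f n v) @ \oo --> l v) ->
  (fun n => Kop eps (f n) w) @ \oo --> Kop eps l w.
Proof.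
move=> hf; rewrite /Kop; case: ifP => _.
  by apply: cvgD; apply: cvgMl_tmp.
by apply: cvgD; [apply: cvgD|]; apply: cvgMl_tmp.
Qed.

Lemma Hf_cvg (f : nat -> nat -> R) (l : nat -> R) v :
  (fun n => f n v) @ \oo --> l v -> (fun n => Hf (f n) v) @ \oo --> Hf l v.
Proof. by move=> h; rewrite /Hf; apply: cvgMl_tmp. Qed.

Lemma Lg_eq w : Lg w = Kop eps (Hf Lg) w.
Proof.
have h1 : (fun n => gs eps n.+1 w) @ \oo --> Lg w.
  by have := @gs_cvgn w; rewrite -cvg_shiftS.
have h2 : (fun n => gs eps n.+1 w) @ \oo --> Kop eps (Hf Lg) w.
  by apply: Kop_cvg => v; apply: Hf_cvg; apply: gs_cvgn.
exact: (cvg_unique _ h1 h2).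
Qed.

End Ana.

Lemma kern_ineq (R : realType) (r x N : R) : 0 <= r -> r <= 4^-1 -> 2 <= x -> 0 <= N ->
  x / (x + N + 1) <= r * ((x + 1) / (x + 1 + N)) + r * ((x - 1) / (x - 1 + N))
     + (1 - r *+ 2) * (x / (x + N)).
Proof.
move=> r0 r1 x2 N0.
rewrite -subr_ge0.
have -> : r * ((x + 1) / (x + 1 + N)) + r * ((x - 1) / (x - 1 + N))
     + (1 - r *+ 2) * (x / (x + N)) - x / (x + N + 1) =
   (x * (x + N - 1) - 2 * r * N) / ((x - 1 + N) * (x + N) * (x + N + 1)).
  rewrite mulr2n; field.
  by apply/and3P; split; apply/eqP => h; lra.
apply: divr_ge0; first nra.
apply: mulr_ge0; first apply: mulr_ge0; lra.
Qed.

Lemma kern_ineq1 (R : realType) (r N : R) : 0 <= r -> r <= 4^-1 -> 0 <= N ->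
  1 / (N + 2) <= r * (2 / (2 + N)) + (1 - r *+ 2) * (1 / (1 + N)).
Proof.
move=> r0 r1 N0.
rewrite -subr_ge0.
have -> : r * (2 / (2 + N)) + (1 - r *+ 2) * (1 / (1 + N)) - 1 / (N + 2) =
   (1 - 2 * r) / ((N + 1) * (N + 2)).
  rewrite mulr2n; field.
  by apply/andP; split; apply/eqP => h; lra.
apply: divr_ge0; first lra.
apply: mulr_ge0; lra.
Qed.

Section Ana2.
Variables (R : realType) (eps : R).
Hypothesis he : 0 < eps < 1.

Lemma Lg_bnd w : 0 <= Lg eps w <= 1.
Proof.
have hc := @gs_cvgn R eps he w.
have hd : nonincreasing_seq (fun n => gs eps n w).
  by apply/nonincreasing_seqP => n; exact: gs_decr.
apply/andP; split.
  apply: limr_ge => //; apply: nearW => n; by case/andP: (gs_bnd he n w).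
exact: (nonincreasing_cvgn_ge hd hc 0).
Qed.

Lemma M_rec k : Hf (Lg eps) k.+2 = 2 * Hf (Lg eps) k.+1 - Hf (Lg eps) k.
Proof.
have r0 := rr_gt0 he.
have E := Lg_eq he k.+1.
move: E; rewrite /Kop /= /Hf /= !mul1r => E.
apply: (mulIf (lt0r_neq0 r0)).
set A := (_ * Lg eps k) in E *.
nra.
Qed.

Lemma M_lin k : Hf (Lg eps) k = k%:R * Hf (Lg eps) 1.
Proof.
suff : Hf (Lg eps) k = k%:R * Hf (Lg eps) 1 /\ Hf (Lg eps) k.+1 = k.+1%:R * Hf (Lg eps) 1 by case.
elim: k => [|k [IH1 IH2]].
  by rewrite /Hf /= !mul0r !mul1r.
split; first exact: IH2. rewrite M_rec IH1 IH2 -[k.+2]addn2 -[k.+1]addn1 !natrD; ring.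
Qed.

Lemma M1_0 : Hf (Lg eps) 1 = 0.
Proof.
have h0 : 0 <= Hf (Lg eps) 1 by rewrite /Hf /= mul1r; case/andP: (Lg_bnd 1).
apply/eqP; rewrite eq_le h0 andbT; rewrite leNgt; apply/negP => hpos.
set m := Hf (Lg eps) 1 in h0 hpos.
set n := (Num.truncn (m^-1)).+1.
have hn : m^-1 < n%:R by apply: Num.Theory.truncnS_gt.
have : Hf (Lg eps) n <= 1 by rewrite /Hf /= mul1r; case/andP: (Lg_bnd n).
rewrite M_lin -/m => hle.
have : 1 < n%:R * m.
  by rewrite -(ltr_pdivrMr _ _ hpos) div1r.
lra.
Qed.

Lemma Lg0 w : Lg eps w = 0.
Proof.
case: w => [|k].
  by rewrite (Lg_eq he 0) /Kop /= M1_0 /Hf /= mul0r mulr0 mulr0 addr0.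
have := M_lin k.+1; rewrite M1_0 mulr0 /Hf /= mul1r //.
Qed.

Lemma gs_to0 w : (fun n => gs eps n w) @ \oo --> 0.
Proof. by rewrite -(Lg0 w); exact: (@gs_cvgn R eps he w). Qed.

End Ana2.

Lemma kern_nat (R : realType) (r : R) j n : 0 <= r -> r <= 4^-1 ->
  (j.+2)%:R / (j.+2 + n.+1)%:R <= r * ((j.+3)%:R / (j.+3 + n)%:R)
    + r * ((j.+1)%:R / (j.+1 + n)%:R) + (1 - r *+ 2) * ((j.+2)%:R / (j.+2 + n)%:R).
Proof.
move=> r0 r1.
have hj : 0 <= j%:R :> R by apply: ler0n.
have hn : 0 <= n%:R :> R by apply: ler0n.
rewrite -subr_ge0 !natrD !mulrS.
set J := j%:R in hj *; set N := n%:R in hn *.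
rewrite mulr0n addr0.
have -> : r * ((1 + (1 + (1 + J))) / (1 + (1 + (1 + J)) + N)) +
  r * ((1 + J) / (1 + J + N)) +
  (1 - (r + r)) * ((1 + (1 + J)) / (1 + (1 + J) + N)) -
  (1 + (1 + J)) / (1 + (1 + J) + (1 + N)) = ((J + 2) * (J + N + 1) - 2 * r * N) / ((J + 1 + N) * (J + 2 + N) * (J + 3 + N)).
  field.
  by repeat (apply/andP; split); apply/eqP => h; lra.
apply: divr_ge0; first nra.
apply: mulr_ge0; first apply: mulr_ge0; lra.
Qed.

Lemma kern_nat1 (R : realType) (r : R) n : 0 <= r -> r <= 4^-1 ->
  1%:R / (1 + n.+1)%:R <= r * (2%:R / (2 + n)%:R)
    + r * (0%:R / (0 + n)%:R) + (1 - r *+ 2) * (1%:R / (1 + n)%:R).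
Proof.
move=> r0 r1.
have hn : 0 <= n%:R :> R by apply: ler0n.
rewrite mul0r mulr0 addr0 -subr_ge0 !natrD !mulrS.
set N := n%:R in hn *.
rewrite mulr0n !addr0.
have -> : r * ((1 + 1) / (1 + 1 + N)) +
  (1 - (r + r)) * (1 / (1 + N)) -
  1 / (1 + 1 + N) = (1 - 2 * r) / ((N + 1) * (N + 2)).
  field.
  by repeat (apply/andP; split); apply/eqP => h; lra.
apply: divr_ge0; first lra.
apply: mulr_ge0; lra.
Qed.

Section Ana3.
Variables (R : realType) (eps : R).
Hypothesis he : 0 < eps < 1.

Lemma gs_lb n w : w%:R / (w + n)%:R <= Hf (gs eps n) w.
Proof.
have r0 := ltW (rr_gt0 he); have r1 := rr_le eps.
elim: n w => [|n IH] w.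
  case: w => [|k]; first by rewrite /Hf /= !mul0r.
  by rewrite /Hf /= mul1r addn0 divff // pnatr_eq0.
case: w => [|k]; first by rewrite /Hf /= !mul0r.
rewrite /Hf /= mul1r.
apply: le_trans (@Kop_mono R eps he (fun v => v%:R / (v + n)%:R) (Hf (gs eps n)) k.+1 IH).
rewrite /Kop /=.
case: k => [|j]; [exact: kern_nat1 | exact: kern_nat].
Qed.

Lemma gs_lb2 n w : rr eps / n.+1%:R <= gs eps n.+1 w.
Proof.
have r0 := ltW (rr_gt0 he); have r1 := rr_le eps.
case: w => [|k].
  rewrite /= /Kop /= {1}/Hf /= mul0r mulr0 add0r.
  apply: ler_wpM2l => //.
  have := gs_lb n 1; rewrite div1r.
  by rewrite add1n.
have := gs_lb n.+1 k.+1; rewrite /Hf /= mul1r; apply: le_trans.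
have hk : 0 <= k%:R :> R by apply: ler0n.
have hn : 0 <= n%:R :> R by apply: ler0n.
rewrite -subr_ge0 !natrD !mulrS.
set K := k%:R in hk *; set N := n%:R in hn *.
have -> : (1 + K) / (1 + K + (1 + N)) - rr eps / (1 + N) =
  ((1 + K) * (1 + N) - rr eps * (2 + K + N)) / ((2 + K + N) * (1 + N)).
  by field; repeat (apply/andP; split); apply/eqP => h; lra.
apply: divr_ge0; first nra.
apply: mulr_ge0; lra.
Qed.

Lemma es_lb N w : rr eps * series (@harmonic R) N <= es eps N.+1 w.
Proof.
rewrite es_sum big_ord_recl /series /= big_mkord mulr_sumr.
have g0 : 0 <= gs eps 0 w by rewrite /= ler01.
rewrite -[X in X <= _]add0r; apply: lerD => //.
apply: ler_sum => i _; rewrite /harmonic /=.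
exact: gs_lb2.
Qed.

End Ana3.

Unset Implicit Arguments.
Local Open Scope classical_set_scope.
Local Open Scope ring_scope.

Theorem mainTheorem9 (R : realType) (eps : R) (cap : capacity) (w a : nat) :
  0 < eps < 1 -> cap_ge2 cap -> (0 < a)%N ->
  ((fun n => prob_tau_le eps cap (init2 a w) n) @ \oo --> (1 : R)) /\
  ((fun n => exp_tau_min eps cap (init2 a w) n) @ \oo --> +oo).
Proof.
move=> he hc ha; split.
  have E : (fun n => prob_tau_le eps cap (init2 a w) n) = (fun n => 1 - gs eps n w).
    by apply: funext => n; rewrite prob_Surv (@Surv_gs R eps cap n a w hc ha).
  rewrite E -[X in _ --> X](subr0 (1 : R)).
  exact: (cvgB (cvg_cst (1 : R)) (gs_to0 he w)).
have E : (fun n => exp_tau_min eps cap (init2 a w) n) = (fun n => es eps n w).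
  by apply: funext => n; exact: (@Expt_es R eps cap n a w hc ha).
rewrite E -cvg_shiftS.
have r0 := rr_gt0 he.
apply: (@ger_cvgy _ _ _ _ (fun N => rr eps * series (@harmonic R) N)).
  by apply: nearW => N; exact: es_lb.
have hs : series (@harmonic R) @ \oo --> +oo.
  apply: nondecreasing_dvgn_lt; last exact: dvg_harmonic.
  by apply: nondecreasing_series => n _ _; exact: harmonic_ge0.
apply/cvgryPge => A.
move/cvgryPge: hs => /(_ (A / rr eps)).
apply: filterS => n h.
by rewrite -(ler_pdivrMl _ _ r0) mulrC.
Qed.
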